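(* Fix a $C^0$-concept over $\mathbb{K}$. Let $E,F\in\mathcal{M}$, $U\subseteq E$ open, $k\ge2$, $f\colon U\to F$ of class $C^k$, and let $f(x+th)=\sum_{j=0}^kt^ja_j(x,h)+t^kR_{k+1}(x,h,t)$ ($(x,h,t)\in U^{[1]}$) be the unique expansion with $a_j\colon U\times E\to F$ of class $C^{k-j}$ and $R_{k+1}\colon U^{[1]}\to F$ of class $C^0$ with $R_{k+1}(x,h,0)=0$. Then $a_0(x,h)=f(x)$ is constant in $h$, $a_1(x,h)=df(x)h$ is linear in $h$, and $a_2(x,\cdot)$ is an $F$-valued quadratic form with $$a_2(x,h_1+h_2)-a_2(x,h_1)-a_2(x,h_2)=d^2f(x)(h_1,h_2);$$ in particular $2a_2(x,h)=d^2f(x)(h,h)$.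
   Context: Let $\mathbb{K}$ be a commutative ring with unit carrying a topology. A $C^0$-concept over $\mathbb{K}$ consists of: (a) a class $\mathcal{M}$ of topologized $\mathbb{K}$-modules with $\mathbb{K}\in\mathcal{M}$; (b) for $E,F\in\mathcal{M}$ and open $U\subseteq E$, a set $C^0(U,F)$ of continuous maps; (c) for $E_1,E_2\in\mathcal{M}$ a topology on $E_1\times E_2$ (not necessarily the product topology) making it a member of $\mathcal{M}$; subject to: (I.1) composites of $C^0$-maps are $C^0$, identities and inclusions of open subsets are $C^0$; (I.2) $x\mapsto rx+b$ is $C^0$; (I.3) $t\mapsto tv+x$ is $C^0$; (I.4) $\mathbb{K}^\times$ is open and inversion is $C^0$; (I.5) $C^0$ is local on open covers; (II.1) projections and $v\mapsto(v,y)$, $w\mapsto(x,w)$ are $C^0$; (II.2) $f_1\times f_2$ is $C^0$ for $C^0$-maps $f_i$; (II.3) diagonals are $C^0$; (II.4) exchange/associativity maps of products are $C^0$ both ways; (II.5) addition and scalar multiplication are $C^0$; (III) a $C^0$-map on open $U\subseteq\mathbb{K}$ is determined by its values on $U\cap\mathbb{K}^\times$. For open $V\subseteq X$, $V^{[1]}=\{(x,v,t)\in V\times X\times\mathbb{K}:x+tv\in V\}$; a $C^0$-map $g$ is $C^1$ if there is a $C^0$-map $g^{[1]}$ on $V^{[1]}$ with $g(x+tv)-g(x)=t\,g^{[1]}(x,v,t)$, and $dg(x)v:=g^{[1]}(x,v,0)=:\partial_vg(x)$; recursively $g$ is $C^{k+1}$ if $C^k$ and $g^{[k]}$ is $C^1$,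 $g^{[k+1]}=(g^{[k]})^{[1]}$. For $f$ of class $C^2$, $d^2f(x)(v,w):=\partial_v\partial_wf(x)$. An $F$-valued quadratic form is a map $q\colon E\to F$ with $q(th)=t^2q(h)$ for all $t\in\mathbb{K}$ and $q(h_1+h_2)-q(h_1)-q(h_2)$ $\mathbb{K}$-bilinear in $(h_1,h_2)$. *)

(* Defs.v *)
From HB Require Import structures.
From mathcomp Require Import all_boot all_algebra.
From Stdlib Require Import ClassicalEpsilon.
Set Implicit Arguments. Unset Strict Implicit. Unset Printing Implicit Defensive.
Import GRing.Theory.
Local Open Scope ring_scope.

Definition pset (T : Type) := T -> Prop.

Record Mod (K : comPzRingType) := MkMod {
  car :> lmodType K ;
  opn : pset (pset car) }.
Arguments MkMod {K}.
Arguments opn {K}.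

Definition is_topology (T : Type) (O : pset (pset T)) : Prop :=
  [/\ O (fun _ => True), O (fun _ => False),
      (forall (I : Type) (A : I -> pset T), (forall i, O (A i)) ->
          O (fun x => exists i, A i x)) &
      (forall A B, O A -> O B -> O (fun x => A x /\ B x))].

Section Concept.
Variable K : comPzRingType.
Variable topK : pset (pset K).

Definition Kmod : Mod K := MkMod K^o topK.

Definition Kunit (t : K) : Prop := exists s : K, t * s = 1.
Definition invK (t : K) : K :=
  epsilon (inhabits 0) (fun s : K => t * s = 1).

(* product topologies provided by a C^0-concept *)
Definition ProdTop := forall E1 E2 : Mod K, pset (pset (car E1 * car E2)%type).
Definition prodM (PT : ProdTop) (E1 E2 : Mod K) : Mod K :=
  MkMod [the lmodType K of (car E1 * car E2)%type] (PT E1 E2).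

(* C^0(U,F) for U subset of E: maps are total functions car E -> car F,
   only their values on U matter (see axiom c0_ext). *)
Definition C0Rel := forall E F : Mod K, pset (car E) -> (car E -> car F) -> Prop.

Definition continuous_on (E F : Mod K) (U : pset E) (f : E -> F) : Prop :=
  forall W, opn F W -> opn E (fun x => U x /\ W (f x)).

Definition is_C0_concept (inM : Mod K -> Prop) (PT : ProdTop) (C0 : C0Rel) : Prop :=
  let X := prodM PT in
  (forall E, inM E -> is_topology (opn E)) /\
  inM Kmod /\
  (forall E1 E2, inM E1 -> inM E2 -> inM (X E1 E2)) /\
  (forall E F U f, inM E -> inM F -> C0 E F U f -> opn E U) /\
  (forall E F U f, inM E -> inM F -> C0 E F U f -> continuous_on U f) /\
  (forall E F U f g, inM E -> inM F -> C0 E F U f ->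
       (forall x, U x -> f x = g x) -> C0 E F U g) /\
  (forall (E F G : Mod K) U V (f : E -> F) (g : F -> G), inM E -> inM F -> inM G ->
       C0 E F U f -> C0 F G V g -> (forall x, U x -> V (f x)) ->
       C0 E G U (fun x => g (f x))) /\
  (forall E U, inM E -> opn E U -> C0 E E U (fun x => x)) /\
  (forall (E : Mod K) (r : K) (b : E), inM E ->
       C0 E E (fun _ => True) (fun x => r *: x + b)) /\
  (forall (E : Mod K) (v x : E), inM E ->
       C0 Kmod E (fun _ => True) (fun t : K^o => (t : K) *: v + x)) /\
  opn Kmod Kunit /\ C0 Kmod Kmod Kunit invK /\
  (forall (E F : Mod K) (I : Type) (Ui : I -> pset E) (f : E -> F), inM E -> inM F ->
       (forall i, C0 E F (Ui i) f) -> C0 E F (fun x => exists i, Ui i x) f) /\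
  (forall E1 E2, inM E1 -> inM E2 ->
       C0 (X E1 E2) E1 (fun _ => True) (fun p => p.1) /\
       C0 (X E1 E2) E2 (fun _ => True) (fun p => p.2) /\
       (forall y : E2, C0 E1 (X E1 E2) (fun _ => True) (fun v => (v, y))) /\
       (forall x : E1, C0 E2 (X E1 E2) (fun _ => True) (fun w => (x, w)))) /\
  (forall (E1 E2 F1 F2 : Mod K) U1 U2 (f1 : E1 -> F1) (f2 : E2 -> F2),
       inM E1 -> inM E2 -> inM F1 -> inM F2 ->
       C0 E1 F1 U1 f1 -> C0 E2 F2 U2 f2 ->
       C0 (X E1 E2) (X F1 F2) (fun p => U1 p.1 /\ U2 p.2)
          (fun p => (f1 p.1, f2 p.2))) /\
  (forall E, inM E -> C0 E (X E E) (fun _ => True) (fun x => (x, x))) /\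
  (forall E1 E2, inM E1 -> inM E2 ->
       C0 (X E1 E2) (X E2 E1) (fun _ => True) (fun p => (p.2, p.1))) /\
  (forall E1 E2 E3, inM E1 -> inM E2 -> inM E3 ->
       C0 (X (X E1 E2) E3) (X E1 (X E2 E3)) (fun _ => True)
          (fun p => (p.1.1, (p.1.2, p.2))) /\
       C0 (X E1 (X E2 E3)) (X (X E1 E2) E3) (fun _ => True)
          (fun p => ((p.1, p.2.1), p.2.2))) /\
  (forall E, inM E ->
       C0 (X E E) E (fun _ => True) (fun p => p.1 + p.2) /\
       C0 (X Kmod E) E (fun _ => True) (fun p => (p.1 : K) *: p.2)) /\
  (* (III) *)
  (forall (F : Mod K) U (f g : Kmod -> F), inM F ->
       C0 Kmod F U f -> C0 Kmod F U g ->
       (forall t, U t -> Kunit t -> f t = g t) -> forall t, U t -> f t = g t).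

End Concept.

Record C0concept (K : comPzRingType) (topK : pset (pset K)) := {
  inM : Mod K -> Prop ;
  prodT : ProdTop K ;
  isC0 : C0Rel K ;
  C0concept_ax : is_C0_concept topK inM prodT isC0 }.
Arguments inM {K topK}.
Arguments prodT {K topK}.
Arguments isC0 {K topK}.

Section Diff.
Variables (K : comPzRingType) (topK : pset (pset K)) (c : C0concept topK).

Definition pM (E1 E2 : Mod K) : Mod K := prodM (prodT c) E1 E2.

Definition M1 (X : Mod K) : Mod K := pM X (pM X (Kmod topK)).

Definition setV1 (X : Mod K) (V : pset X) : pset (M1 X) :=
  fun p => V p.1 /\ V (p.1 + (p.2.2 : K) *: p.2.1).

Definition is_dq (X F : Mod K) (V : pset X) (g : X -> F) (g1 : M1 X -> F) : Prop :=
  isC0 c (M1 X) F (setV1 V) g1 /\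
  forall p : M1 X, setV1 V p ->
    g (p.1 + (p.2.2 : K) *: p.2.1) - g p.1 = (p.2.2 : K) *: g1 p.

(* g is C^k on V: g is C^0 and (for k > 0) some g^[1] is C^(k-1) on V^[1];
   iterating, this is: g^[0] = g, ..., g^[k] all exist and are C^0. *)
Fixpoint isCk (k : nat) (X F : Mod K) (V : pset X) (g : X -> F) {struct k} : Prop :=
  isC0 c X F V g /\
  match k with
  | 0 => True
  | k'.+1 => exists g1 : M1 X -> F, is_dq V g g1 /\ isCk k' (setV1 V) g1
  end.

(* the (unique, when it exists) map g^[1] *)
Definition dq (X F : Mod K) (V : pset X) (g : X -> F) : M1 X -> F :=
  epsilon (inhabits (fun _ => 0)) (fun g1 => is_dq V g g1).

Definition dd (X F : Mod K) (V : pset X) (g : X -> F) (x v : X) : F :=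
  dq V g (x, (v, (0 : K^o))).

Definition dd2 (X F : Mod K) (V : pset X) (f : X -> F) (x v w : X) : F :=
  dd V (fun y => dd V f y w) x v.

End Diff.
Arguments setV1 {K topK} c {X} V _.
Arguments is_dq {K topK} c {X F} V g g1.
Arguments dq {K topK} c {X F} V g _.


Definition is_linear (K : comPzRingType) (E F : lmodType K) (l : E -> F) : Prop :=
  forall (r : K) (h1 h2 : E), l (r *: h1 + h2) = r *: l h1 + l h2.

Definition is_bilinear (K : comPzRingType) (E F : lmodType K) (B : E -> E -> F) : Prop :=
  (forall h2, is_linear (fun h1 => B h1 h2)) /\ (forall h1, is_linear (B h1)).

Definition is_quadratic_form (K : comPzRingType) (E F : lmodType K) (q : E -> F) : Prop :=
  (forall (t : K) (h : E), q (t *: h) = (t ^+ 2) *: q h) /\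
  is_bilinear (fun h1 h2 => q (h1 + h2) - q h1 - q h2).

(* Main.v *)
Require Import Defs.
From HB Require Import structures.
From mathcomp Require Import all_boot all_algebra.
From Stdlib Require Import ClassicalEpsilon FunctionalExtensionality PropExtensionality.
Import GRing.Theory.
Local Open Scope ring_scope.
Set Implicit Arguments. Unset Strict Implicit.

Lemma solve3 (V : zmodType) (d a b c : V) : d = a + b + c -> c = d - a - b.
Proof. by move=> ->; rewrite (addrC (a + b) c) -addrA -opprD addrK. Qed.
Lemma rearr (V : zmodType) (fx A B Q1 G Q2 : V) :
  fx + A + Q1 + (B + G) + Q2 = fx + (A + B) + (Q1 + G + Q2).
Proof. by rewrite -!addrA (addrCA Q1 B). Qed.
Lemma lin0 (K : comPzRingType) (E F : lmodType K) (l : E -> F) : is_linear l -> l 0 = 0.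
Proof.
move=> hl; have := hl 1 0 0; rewrite !scale1r addr0 => e.
by apply: (addrI (l 0)); rewrite addr0; exact: esym e.
Qed.

Section S.
Variables (K : comPzRingType) (topK : pset (pset K)) (c : C0concept topK).
Notation C0 := (isC0 c).
Notation KM := (Kmod topK).
Notation X := (pM c).

Definition AX := C0concept_ax c.

Ltac dax := have := AX; unfold is_C0_concept; cbv zeta;
  move=> [H1 [H2 [H3 [H4 [H5 [H6 [H7 [H8 [H9 [H10 [H11 [H12 [H13 [H14 [H15 [H16 [H17 [H18 [H19 H20]]]]]]]]]]]]]]]]]]].

Lemma inM_K : inM c KM. Proof. by dax. Qed.
Lemma inM_X E1 E2 : inM c E1 -> inM c E2 -> inM c (X E1 E2). Proof. by dax; apply: H3. Qed.
Lemma top_of (E : Mod K) : inM c E -> is_topology (opn E). Proof. by dax; apply: H1. Qed.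
Lemma c0_open (E F : Mod K) U f : inM c E -> inM c F -> C0 E F U f -> opn E U.
Proof. by dax; apply: H4. Qed.
Lemma c0_cont (E F : Mod K) U f : inM c E -> inM c F -> C0 E F U f -> continuous_on U f.
Proof. by dax; apply: H5. Qed.
Lemma c0_ext (E F : Mod K) U (f g : E -> F) : inM c E -> inM c F -> C0 E F U f ->
  (forall x, U x -> f x = g x) -> C0 E F U g.
Proof. by dax; apply: H6. Qed.
Lemma c0_comp (E F G : Mod K) U V (f : E -> F) (g : F -> G) : inM c E -> inM c F -> inM c G ->
  C0 E F U f -> C0 F G V g -> (forall x, U x -> V (f x)) -> C0 E G U (fun x => g (f x)).
Proof. by dax; apply: H7. Qed.
Lemma c0_id (E : Mod K) U : inM c E -> opn E U -> C0 E E U (fun x => x).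
Proof. by dax; apply: H8. Qed.
Lemma c0_line (E : Mod K) (v x : E) : inM c E -> C0 KM E (fun _ => True) (fun t : KM => (t : K) *: v + x).
Proof. by dax; apply: H10. Qed.
Lemma c0_fst (E1 E2 : Mod K) : inM c E1 -> inM c E2 -> C0 (X E1 E2) E1 (fun _ => True) (fun p => p.1).
Proof. by dax; move=> h1 h2; case: (H14 _ _ h1 h2). Qed.
Lemma c0_snd (E1 E2 : Mod K) : inM c E1 -> inM c E2 -> C0 (X E1 E2) E2 (fun _ => True) (fun p => p.2).
Proof. by dax; move=> h1 h2; case: (H14 _ _ h1 h2) => _ []. Qed.
Lemma c0_pairl (E1 E2 : Mod K) (y : E2) : inM c E1 -> inM c E2 -> C0 E1 (X E1 E2) (fun _ => True) (fun v => (v, y)).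
Proof. by dax; move=> h1 h2; case: (H14 _ _ h1 h2) => _ [] _ []. Qed.
Lemma c0_prod (E1 E2 F1 F2 : Mod K) U1 U2 (f1 : E1 -> F1) (f2 : E2 -> F2) :
  inM c E1 -> inM c E2 -> inM c F1 -> inM c F2 -> C0 E1 F1 U1 f1 -> C0 E2 F2 U2 f2 ->
  C0 (X E1 E2) (X F1 F2) (fun p => U1 p.1 /\ U2 p.2) (fun p => (f1 p.1, f2 p.2)).
Proof. by dax; apply: H15. Qed.
Lemma c0_diag (E : Mod K) : inM c E -> C0 E (X E E) (fun _ => True) (fun x => (x, x)).
Proof. by dax; apply: H16. Qed.
Lemma c0_addop (E : Mod K) : inM c E -> C0 (X E E) E (fun _ => True) (fun p => p.1 + p.2).
Proof. by dax; move=> h; case: (H19 _ h). Qed.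
Lemma c0_scaleop (E : Mod K) : inM c E -> C0 (X KM E) E (fun _ => True) (fun p => (p.1 : K) *: p.2).
Proof. by dax; move=> h; case: (H19 _ h). Qed.
Lemma c0_III (F : Mod K) U (f g : KM -> F) : inM c F -> C0 KM F U f -> C0 KM F U g ->
  (forall t, U t -> Kunit t -> f t = g t) -> forall t, U t -> f t = g t.
Proof. by dax; apply: H20. Qed.



Lemma c0_restr (A B : Mod K) (U V : pset A) f : inM c A -> inM c B -> opn A U ->
  (forall x, U x -> V x) -> C0 A B V f -> C0 A B U f.
Proof.
move=> hA hB hU hUV hf.
exact (@c0_comp A A B U V (fun x => x) f hA hA hB (c0_id hA hU) hf hUV).
Qed.

Lemma c0_pair (A B1 B2 : Mod K) U (f1 : A -> B1) (f2 : A -> B2) :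
  inM c A -> inM c B1 -> inM c B2 -> C0 A B1 U f1 -> C0 A B2 U f2 ->
  C0 A (X B1 B2) U (fun t => (f1 t, f2 t)).
Proof.
move=> hA h1 h2 c1 c2.
have hU := c0_open hA h1 c1.
have hd := c0_restr hA (inM_X hA hA) hU (fun _ _ => I) (c0_diag hA).
have hp := c0_prod hA hA h1 h2 c1 c2.
exact: (c0_comp hA (inM_X hA hA) (inM_X h1 h2) hd hp (fun x ux => conj ux ux)).
Qed.

Lemma c0_add (A B : Mod K) U (f g : A -> B) : inM c A -> inM c B ->
  C0 A B U f -> C0 A B U g -> C0 A B U (fun t => f t + g t).
Proof.
move=> hA hB cf cg.
have hp := c0_pair hA hB hB cf cg.
exact: (c0_comp hA (inM_X hB hB) hB hp (c0_addop hB) (fun _ _ => I)).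
Qed.

Lemma c0_scale (A B : Mod K) U (f : A -> KM) (g : A -> B) : inM c A -> inM c B ->
  C0 A KM U f -> C0 A B U g -> C0 A B U (fun t => (f t : K) *: g t).
Proof.
move=> hA hB cf cg.
have hp := c0_pair hA inM_K hB cf cg.
exact: (c0_comp hA (inM_X inM_K hB) hB hp (c0_scaleop hB) (fun _ _ => I)).
Qed.

Lemma c0_const (B : Mod K) U (b : B) : inM c B -> opn KM U -> C0 KM B U (fun _ => b).
Proof.
move=> hB hU.
have h := c0_line (0 : B) b hB.
have h' : C0 KM B (fun _ => True) (fun _ => b).
  by apply: (c0_ext inM_K hB h) => t _; rewrite scaler0 add0r.
exact: (c0_restr inM_K hB hU (fun _ _ => I) h').
Qed.

Lemma c0_idK U : opn KM U -> C0 KM KM U (fun t => t).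
Proof. by move=> hU; apply: c0_id inM_K hU. Qed.

Lemma c0_sum (B : Mod K) U n (f : 'I_n -> KM -> B) : inM c B -> opn KM U ->
  (forall i, C0 KM B U (f i)) -> C0 KM B U (fun t => \sum_(i < n) f i t).
Proof.
move=> hB hU; elim: n f => [|n IH] f hf.
  apply: (c0_ext inM_K hB (c0_const (0 : B) hB hU)) => t _; by rewrite big_ord0.
have h := c0_add inM_K hB (IH (fun i => f (widen_ord (leqnSn n) i)) (fun i => hf _)) (hf ord_max).
by apply: (c0_ext inM_K hB h) => t _; rewrite big_ord_recr.
Qed.

Lemma c0_pow U (chi : KM -> KM) n : opn KM U -> C0 KM KM U chi ->
  C0 KM KM U (fun t => ((chi t : K) ^+ n : K^o)).
Proof.
move=> hU hc; elim: n => [|n IH].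
  have h0 := @c0_const KM U 1 inM_K hU.
  apply: (c0_ext inM_K inM_K h0) => t _. by rewrite expr0.
have h := c0_scale inM_K inM_K hc IH.
by apply: (c0_ext inM_K inM_K h) => t _; rewrite exprS.
Qed.

Lemma line_open (E : Mod K) (U : pset E) (h x : E) : inM c E -> opn E U ->
  opn KM (fun t : KM => U ((t : K) *: h + x)).
Proof.
move=> hE hU.
have := c0_cont inM_K hE (c0_line h x hE) hU.
have -> : (fun t : KM => True /\ U ((t : K) *: h + x)) = (fun t : KM => U ((t : K) *: h + x)).
  apply: functional_extensionality => t; apply: propositional_extensionality; tauto.
by [].
Qed.

Lemma open_and (A : Mod K) (P Q : pset A) : inM c A -> opn A P -> opn A Q ->
  opn A (fun x => P x /\ Q x).
Proof. by move=> hA; case: (top_of hA) => _ _ _; apply. Qed.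

Lemma unit_cancel (B : lmodType K) (t : K) (v w : B) : Kunit t -> t *: v = t *: w -> v = w.
Proof.
move=> [s hs] e.
have : s *: (t *: v) = s *: (t *: w) by rewrite e.
by rewrite !scalerA mulrC hs !scale1r.
Qed.

Section Fixed.
Variables (E F : Mod K) (hE : inM c E) (hF : inM c F) (U : pset E) (hU : opn E U).

Lemma c0_comp3 (H : M1 c E -> F) U' (phi psi : KM -> E) (chi : KM -> KM) :
  C0 (M1 c E) F (setV1 c U) H -> C0 KM E U' phi -> C0 KM E U' psi -> C0 KM KM U' chi ->
  (forall t, U' t -> setV1 c U (phi t, (psi t, chi t))) ->
  C0 KM F U' (fun t => H (phi t, (psi t, chi t))).
Proof.
move=> cH c1 c2 c3 hin.
have p1 := c0_pair inM_K hE inM_K c2 c3.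
have p2 := c0_pair inM_K hE (inM_X hE inM_K) c1 p1.
exact: (c0_comp inM_K (inM_X hE (inM_X hE inM_K)) hF p2 cH hin).
Qed.

Lemma c0_comp2 (H : X E E -> F) U' (phi psi : KM -> E) :
  C0 (X E E) F (fun p => U p.1) H -> C0 KM E U' phi -> C0 KM E U' psi ->
  (forall t, U' t -> U (phi t)) ->
  C0 KM F U' (fun t => H (phi t, psi t)).
Proof.
move=> cH c1 c2 hin.
have p1 := c0_pair inM_K hE hE c1 c2.
exact: (c0_comp inM_K (inM_X hE hE) hF p1 cH hin).
Qed.


Lemma isCk_C0 n (Y G : Mod K) (V : pset Y) (g : Y -> G) : isCk c n V g -> C0 Y G V g.
Proof. by case: n => [|n] []. Qed.

Lemma dq_spec (g : E -> F) : (exists g1, is_dq c U g g1) -> is_dq c U g (dq c U g).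
Proof. move=> ex; rewrite /dq; exact: epsilon_spec. Qed.

Lemma is_dq_ext (g g' : E -> F) g1 : (forall y, U y -> g y = g' y) ->
  is_dq c U g g1 -> is_dq c U g' g1.
Proof.
move=> e [h1 h2]; split => // p hp; rewrite -!e //; [exact: h2 | exact: hp.1 | exact: hp.2].
Qed.


Lemma dq_uniq (g : E -> F) g1 g1' x h : U x -> is_dq c U g g1 -> is_dq c U g g1' ->
  g1 (x, (h, (0 : K^o))) = g1' (x, (h, (0 : K^o))).
Proof.
move=> ux d1 d2.
pose U' := fun t : KM => U ((t : K) *: h + x).
have oU' : opn KM U' := line_open h x hE hU.
have hin : forall t, U' t -> setV1 c U (x, (h, t)).
  by move=> t ht; split => //=; rewrite addrC.
have cx : C0 KM E U' (fun _ => x) := c0_const x hE oU'.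
have ch : C0 KM E U' (fun _ => h) := c0_const h hE oU'.
have ci : C0 KM KM U' (fun t => t) := c0_idK oU'.
have c1 : C0 KM F U' (fun t => g1 (x, (h, t))) := c0_comp3 d1.1 cx ch ci hin.
have c2 : C0 KM F U' (fun t => g1' (x, (h, t))) := c0_comp3 d2.1 cx ch ci hin.
have e := c0_III hF c1 c2 (fun t ht ut => unit_cancel ut
   (etrans (esym (d1.2 _ (hin t ht))) (d2.2 _ (hin t ht)))).
apply: (e (0 : K^o)); by rewrite /U' scale0r add0r.
Qed.


Lemma dq_lin (g : E -> F) g1 x (r : K) h1 h2 : U x -> is_dq c U g g1 ->
  g1 (x, (r *: h1 + h2, (0 : K^o))) =
  r *: g1 (x, (h1, (0 : K^o))) + g1 (x, (h2, (0 : K^o))).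
Proof.
move=> ux d.
pose U' := fun t : KM => U ((t : K) *: h2 + x) /\ U ((t : K) *: (r *: h1 + h2) + x).
have oU' : opn KM U' := open_and inM_K (line_open h2 x hE hU) (line_open (r *: h1 + h2) x hE hU).
have eq1 : forall t : K, (t *: h2 + x) + (t * r) *: h1 = x + t *: (r *: h1 + h2).
  by move=> t; rewrite scalerDr scalerA addrC addrA [RHS]addrC.
have hinL : forall t, U' t -> setV1 c U (x, (r *: h1 + h2, t)).
  by move=> t ht; split => //=; rewrite addrC; exact: ht.2.
have hinR1 : forall t, U' t -> setV1 c U ((t : K) *: h2 + x, (h1, ((t : K) * r : K^o))).
  by move=> t ht; split => /=; [exact: ht.1 | rewrite eq1 addrC; exact: ht.2].
have hinR2 : forall t, U' t -> setV1 c U (x, (h2, t)).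
  by move=> t ht; split => //=; rewrite addrC; exact: ht.1.
have cx : C0 KM E U' (fun _ => x) := c0_const x hE oU'.
have ch1 : C0 KM E U' (fun _ => h1) := c0_const h1 hE oU'.
have ch2 : C0 KM E U' (fun _ => h2) := c0_const h2 hE oU'.
have ch : C0 KM E U' (fun _ => r *: h1 + h2) := c0_const _ hE oU'.
have ci : C0 KM KM U' (fun t => t) := c0_idK oU'.
have cr : C0 KM KM U' (fun _ => (r : K^o)) := c0_const _ inM_K oU'.
have cchi : C0 KM KM U' (fun t => ((t : K) * r : K^o)).
  exact: (c0_ext inM_K inM_K (c0_scale inM_K inM_K ci cr)).
have cphi : C0 KM E U' (fun t => (t : K) *: h2 + x).
  exact: (c0_restr inM_K hE oU' (fun _ _ => I) (c0_line h2 x hE)).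
have cL : C0 KM F U' (fun t => g1 (x, (r *: h1 + h2, t))) := c0_comp3 d.1 cx ch ci hinL.
have cR1 : C0 KM F U' (fun t => g1 ((t : K) *: h2 + x, (h1, ((t : K) * r : K^o))))
  := c0_comp3 d.1 cphi ch1 cchi hinR1.
have cR2 : C0 KM F U' (fun t => g1 (x, (h2, t))) := c0_comp3 d.1 cx ch2 ci hinR2.
have cR := c0_add inM_K hF (c0_scale inM_K hF cr cR1) cR2.
have hu : forall t, U' t -> Kunit t -> g1 (x, (r *: h1 + h2, t)) =
    r *: g1 ((t : K) *: h2 + x, (h1, ((t : K) * r : K^o))) + g1 (x, (h2, t)).
  move=> t ht ut; apply: (unit_cancel ut).
  have e1 := d.2 _ (hinL t ht).
  have e2 := d.2 _ (hinR1 t ht).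
  have e3 := d.2 _ (hinR2 t ht).
  simpl in e1, e2, e3.
  rewrite scalerDr scalerA -e1 -e2 -e3 eq1 (addrC (t *: h2) x).
  by rewrite addrA subrK.
have e := c0_III hF cL cR hu.
have := e (0 : K^o); rewrite /= scale0r add0r mul0r; apply.
by rewrite /U' !scale0r !add0r.
Qed.

Section Main.
Variables (m : nat) (f : E -> F) (hf : isCk c m.+2 U f) (a : nat -> X E E -> F) (R : M1 c E -> F)
 (ha : forall j, (j <= m.+2)%N -> isCk c (m.+2 - j) (fun p : X E E => U p.1) (a j))
 (hR : C0 (M1 c E) F (setV1 c U) R)
 (hR0 : forall x h : E, U x -> R (x, (h, (0 : K^o))) = 0)
 (hexp : forall p : M1 c E, setV1 c U p -> f (p.1 + (p.2.2 : K) *: p.2.1) =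
    \sum_(j < m.+3) ((p.2.2 : K) ^+ j) *: a j (p.1, p.2.1) + ((p.2.2 : K) ^+ m.+2) *: R p).

Definition Qf (y h : E) (t : KM) : F :=
  \sum_(i < m.+1) ((t : K) ^+ i) *: a i.+2 (y, h) + ((t : K) ^+ m) *: R (y, (h, t)).

Lemma expand y h (t : KM) : setV1 c U (y, (h, t)) ->
  f (y + (t : K) *: h) = a 0 (y, h) + (t : K) *: a 1 (y, h) + ((t : K) ^+ 2) *: Qf y h t.
Proof.
move=> hp; have := hexp hp; rewrite /= => ->.
rewrite big_ord_recl big_ord_recl /Qf scalerDr scaler_sumr /= expr0 scale1r expr1.
rewrite -!addrA /bump /= !add1n.
rewrite [X in _ = _ + (_ + (_ + X))]scalerA -exprD addnC addn2.
rewrite [in RHS](eq_bigr (fun i : 'I_m.+1 => (t : K) ^+ (1 + (1 + i)) *: a (1 + (1 + i)) (y, h))) //.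
by move=> i _; rewrite scalerA -exprD addnC addn2 !add1n.

Qed.


Lemma a0_eq x h : U x -> a 0 (x, h) = f x.
Proof.
move=> ux.
have hp : setV1 c U (x, (h, (0 : K^o))) by split => //=; rewrite scale0r addr0.
have := expand hp; rewrite !scale0r addr0 expr2 mul0r scale0r !addr0 => ->.
by [].
Qed.

Lemma c0_Qf U' phi psi chi : C0 KM E U' phi -> C0 KM E U' psi -> C0 KM KM U' chi ->
  (forall t, U' t -> setV1 c U (phi t, (psi t, chi t))) ->
  C0 KM F U' (fun t => Qf (phi t) (psi t) (chi t)).
Proof.
move=> c1 c2 c3 hin.
have oU' := c0_open inM_K hE c1.
have cs : C0 KM F U' (fun t => \sum_(i < m.+1) ((chi t : K) ^+ i) *: a i.+2 (phi t, psi t)).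
  apply: (c0_sum hF oU') => i.
  apply: (c0_scale inM_K hF (c0_pow _ oU' c3)).
  have hi : (i.+2 <= m.+2)%N by exact: ltn_ord i.
  exact: (c0_comp2 (isCk_C0 (ha hi)) c1 c2 (fun t ht => (hin t ht).1)).
have cr := c0_scale inM_K hF (c0_pow m oU' c3) (c0_comp3 hR c1 c2 c3 hin).
exact: (c0_add inM_K hF cs cr).
Qed.

Lemma Qf0 y h : U y -> Qf y h (0 : K^o) = a 2 (y, h).
Proof.
move=> uy; rewrite /Qf big_ord_recl expr0 scale1r big1; last first.
  by move=> i _; rewrite exprS mul0r scale0r.
case: m hR0 => [|n] hR0'; first by rewrite expr0 scale1r hR0' // !addr0.
by rewrite exprS mul0r scale0r !addr0.
Qed.

Lemma a1_eq g1 x h : U x -> is_dq c U f g1 -> a 1 (x, h) = g1 (x, (h, (0 : K^o))).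
Proof.
move=> ux d.
pose U' := fun t : KM => U ((t : K) *: h + x).
have oU' : opn KM U' := line_open h x hE hU.
have hin : forall t, U' t -> setV1 c U (x, (h, t)).
  by move=> t ht; split => //=; rewrite addrC.
have cx : C0 KM E U' (fun _ => x) := c0_const x hE oU'.
have ch : C0 KM E U' (fun _ => h) := c0_const h hE oU'.
have ci : C0 KM KM U' (fun t => t) := c0_idK oU'.
have cL : C0 KM F U' (fun t => g1 (x, (h, t))) := c0_comp3 d.1 cx ch ci hin.
have cR : C0 KM F U' (fun t => a 1 (x, h) + (t : K) *: Qf x h t).
  exact: (c0_add inM_K hF (c0_const _ hF oU') (c0_scale inM_K hF ci (c0_Qf cx ch ci hin))).
have hu : forall t, U' t -> Kunit t -> g1 (x, (h, t)) = a 1 (x, h) + (t : K) *: Qf x h t.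
  move=> t ht ut; apply: (unit_cancel ut).
  have e1 := d.2 _ (hin t ht); simpl in e1.
  rewrite -e1 (expand (hin t ht)) a0_eq // [RHS]scalerDr [in RHS]scalerA -expr2.
  by rewrite -[f x + _ + _]addrA (addrC (f x)) addrK.
have e := c0_III hF cL cR hu.
have := e (0 : K^o); rewrite scale0r addr0 => ->//.
by rewrite /U' scale0r add0r.
Qed.

Lemma a1_dd x h : U x -> a 1 (x, h) = dd c U f x h.
Proof.
move=> ux; have [_ [g1 [dg _]]] := hf.
by rewrite /dd; apply: a1_eq => //; apply: dq_spec; exists g1.
Qed.


Lemma a1_lin x : U x -> is_linear (fun h => a 1 (x, h)).
Proof.
move=> ux r h1 h2 /=; have [_ [g1 [dg _]]] := hf.
rewrite !(a1_eq _ ux dg); exact: (dq_lin _ _ _ ux dg).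
Qed.


Lemma a2_hom x (r : K) h : U x -> a 2 (x, r *: h) = (r ^+ 2) *: a 2 (x, h).
Proof.
move=> ux.
pose U' := fun t : KM => U ((t : K) *: (r *: h) + x).
have oU' : opn KM U' := line_open (r *: h) x hE hU.
have hinL : forall t, U' t -> setV1 c U (x, (r *: h, t)).
  by move=> t ht; split => //=; rewrite addrC.
have hinR : forall t, U' t -> setV1 c U (x, (h, ((t : K) * r : K^o))).
  by move=> t ht; split => //=; rewrite -scalerA addrC.
have cx : C0 KM E U' (fun _ => x) := c0_const x hE oU'.
have ch : C0 KM E U' (fun _ => h) := c0_const h hE oU'.
have crh : C0 KM E U' (fun _ => r *: h) := c0_const _ hE oU'.
have ci : C0 KM KM U' (fun t => t) := c0_idK oU'.
have cr : C0 KM KM U' (fun _ => (r : K^o)) := c0_const _ inM_K oU'.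
have cr2 : C0 KM KM U' (fun _ => ((r ^+ 2 : K) : K^o)) := c0_const _ inM_K oU'.
have cchi : C0 KM KM U' (fun t => ((t : K) * r : K^o)).
  exact: (c0_ext inM_K inM_K (c0_scale inM_K inM_K ci cr)).
have cL : C0 KM F U' (fun t => Qf x (r *: h) t) := c0_Qf cx crh ci hinL.
have cR : C0 KM F U' (fun t => (r ^+ 2) *: Qf x h ((t : K) * r : K^o))
  := c0_scale inM_K hF cr2 (c0_Qf cx ch cchi hinR).
have l0 : a 1 (x, 0) = 0 := lin0 (a1_lin ux).
have lin : a 1 (x, r *: h) = r *: a 1 (x, h).
  by have := a1_lin ux r h 0; rewrite /= addr0 l0 addr0.
have hu : forall t, U' t -> Kunit t ->
    Qf x (r *: h) t = (r ^+ 2) *: Qf x h ((t : K) * r : K^o).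
  move=> t ht ut; apply: (unit_cancel ut); apply: (unit_cancel ut).
  rewrite !scalerA.
  have eL := expand (hinL t ht); have eR := expand (hinR t ht).
  have : a 0 (x, r *: h) + (t : K) *: a 1 (x, r *: h) + ((t : K) ^+ 2) *: Qf x (r *: h) t =
     a 0 (x, h) + ((t : K) * r) *: a 1 (x, h) + (((t : K) * r) ^+ 2) *: Qf x h ((t : K) * r : K^o).
    by rewrite -eL -eR scalerA.
  rewrite !a0_eq // lin scalerA => /addrI e; rewrite !expr2 in e.
  by rewrite e expr2 mulrACA.
have e := c0_III hF cL cR hu.
have := e (0 : K^o); rewrite mul0r !Qf0 //; apply.
by rewrite /U' scale0r add0r.
Qed.

Lemma pair_eq (y h v : E) (t : K) : ((y, h) + t *: (v, 0) : X E E) = (y + t *: v, h).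
Proof. change ((y + t *: v, h + t *: 0) = (y + t *: v, h)). by rewrite scaler0 addr0. Qed.

Lemma Gq_ex h2 : exists Gq, is_dq c U (fun y => a 1 (y, h2)) Gq.
Proof.
have hA : isCk c m.+1 (fun p : X E E => U p.1) (a 1).
  by have := ha (isT : (1 <= m.+2)%N); rewrite subn1.
case: hA => _ [A1 [dA1 cA1]].
pose Psi := fun p : M1 c E => (((p.1, h2), ((p.2.1, (0 : E)), p.2.2)) : M1 c (X E E)).
have hEK := inM_X hE inM_K.
have hM1 := inM_X hE hEK.
have hEE := inM_X hE hE.
have hM1' := inM_X hEE (inM_X hEE inM_K).
have mem : forall p, setV1 c U p -> setV1 c (fun q : X E E => U q.1) (Psi p).
  by move=> p [h1 h2']; split => //=.
exists (fun p => A1 (Psi p)); split.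
  have c1 : C0 (M1 c E) (X E E) (fun _ => True) (fun p => (p.1, h2))
    := c0_comp hM1 hE hEE (c0_fst hE hEK) (c0_pairl h2 hE hE) (fun _ _ => I).
  have c2 : C0 (X E KM) (X E E) (fun _ => True) (fun q => (q.1, (0 : E)))
    := c0_comp hEK hE hEE (c0_fst hE inM_K) (c0_pairl (0 : E) hE hE) (fun _ _ => I).
  have c3 : C0 (X E KM) (X (X E E) KM) (fun _ => True) (fun q => ((q.1, (0 : E)), q.2))
    := c0_pair hEK hEE inM_K c2 (c0_snd hE inM_K).
  have c4 : C0 (M1 c E) (X (X E E) KM) (fun _ => True) (fun p => ((p.2.1, (0 : E)), p.2.2))
    := c0_comp hM1 hEK (inM_X hEE inM_K) (c0_snd hE hEK) c3 (fun _ _ => I).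
  have c5 : C0 (M1 c E) (M1 c (X E E)) (fun _ => True) Psi
    := c0_pair hM1 hEE (inM_X hEE inM_K) c1 c4.
  have oV : opn (M1 c E) (setV1 c U) := c0_open hM1 hF hR.
  have c6 := c0_restr hM1 hM1' oV (fun _ _ => I) c5.
  exact: (c0_comp hM1 hM1' hF c6 dA1.1 mem).
move=> p hp; have := dA1.2 (Psi p) (mem p hp); rewrite /= pair_eq; apply.
Qed.


Lemma a2_B x h1 h2 Gq : U x -> is_dq c U (fun y => a 1 (y, h2)) Gq ->
  a 2 (x, h1 + h2) - a 2 (x, h1) - a 2 (x, h2) = Gq (x, (h1, (0 : K^o))).
Proof.
move=> ux dG.
pose U' := fun t : KM => U ((t : K) *: h1 + x) /\ U ((t : K) *: (h1 + h2) + x).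
have oU' : opn KM U' := open_and inM_K (line_open h1 x hE hU) (line_open (h1 + h2) x hE hU).
have hin12 : forall t, U' t -> setV1 c U (x, (h1 + h2, t)).
  by move=> t ht; split => //=; rewrite addrC; exact: ht.2.
have hin1 : forall t, U' t -> setV1 c U (x, (h1, t)).
  by move=> t ht; split => //=; rewrite addrC; exact: ht.1.
have hin2 : forall t, U' t -> setV1 c U ((t : K) *: h1 + x, (h2, t)).
  move=> t ht; split => /=; first exact: ht.1.
  by rewrite -addrA (addrC x) addrA -scalerDr; exact: ht.2.
have cx : C0 KM E U' (fun _ => x) := c0_const x hE oU'.
have ch1 : C0 KM E U' (fun _ => h1) := c0_const h1 hE oU'.
have ch2 : C0 KM E U' (fun _ => h2) := c0_const h2 hE oU'.
have ch12 : C0 KM E U' (fun _ => h1 + h2) := c0_const _ hE oU'.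
have ci : C0 KM KM U' (fun t => t) := c0_idK oU'.
have cphi : C0 KM E U' (fun t => (t : K) *: h1 + x).
  exact: (c0_restr inM_K hE oU' (fun _ _ => I) (c0_line h1 x hE)).
have cL : C0 KM F U' (fun t => Qf x (h1 + h2) t) := c0_Qf cx ch12 ci hin12.
have cR : C0 KM F U' (fun t => Qf x h1 t + Gq (x, (h1, t)) + Qf ((t : K) *: h1 + x) h2 t).
  exact: (c0_add inM_K hF (c0_add inM_K hF (c0_Qf cx ch1 ci hin1) (c0_comp3 dG.1 cx ch1 ci hin1))
           (c0_Qf cphi ch2 ci hin2)).
have lin : a 1 (x, h1 + h2) = a 1 (x, h1) + a 1 (x, h2).
  by have := a1_lin ux 1 h1 h2; rewrite /= !scale1r.
have hu : forall t, U' t -> Kunit t ->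
    Qf x (h1 + h2) t = Qf x h1 t + Gq (x, (h1, t)) + Qf ((t : K) *: h1 + x) h2 t.
  move=> t ht ut; apply: (unit_cancel ut); apply: (unit_cancel ut).
  rewrite !scalerA.
  have e12 := expand (hin12 t ht).
  have e1 := expand (hin1 t ht).
  have e2 := expand (hin2 t ht).
  have eG := dG.2 _ (hin1 t ht); simpl in eG.
  have pz : (t : K) *: h1 + x + (t : K) *: h2 = x + (t : K) *: (h1 + h2).
    by rewrite scalerDr addrA (addrC x).
  have py : (t : K) *: h1 + x = x + (t : K) *: h1 by rewrite addrC.
  have a0y : a 0 ((t : K) *: h1 + x, h2) = f (x + (t : K) *: h1).
    by rewrite a0_eq; [rewrite py | exact: ht.1].
  have eB : (t : K) *: a 1 ((t : K) *: h1 + x, h2) =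
      (t : K) *: a 1 (x, h2) + ((t : K) ^+ 2) *: Gq (x, (h1, t)).
    by rewrite py expr2 -scalerA -eG scalerBr [RHS]addrC subrK.
  have lin' : (t : K) *: a 1 (x, h1 + h2) = (t : K) *: a 1 (x, h1) + (t : K) *: a 1 (x, h2).
    by rewrite lin scalerDr.
  rewrite a0_eq // lin' in e12.
  rewrite a0_eq // in e1.
  rewrite pz a0y e1 eB in e2.
  have := etrans (esym e12) e2; rewrite rearr => /addrI e.
  rewrite !expr2 in e.
  by rewrite e -!scalerDr.
have e := c0_III hF cL cR hu.
have u0 : U' (0 : K^o) by rewrite /U' !scale0r !add0r; split.
move: (e _ u0); rewrite scale0r add0r !Qf0 // => ->.
by rewrite addrAC addrK (addrC (a 2 (x, h1))) addrK.
Qed.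

Lemma B_dd x h1 h2 : U x ->
  a 2 (x, h1 + h2) - a 2 (x, h1) - a 2 (x, h2) = dd2 c U f x h1 h2.
Proof.
move=> ux; have [G dG] := Gq_ex h2.
have dG' : is_dq c U (fun y => dd c U f y h2) G := is_dq_ext (fun y uy => a1_dd h2 uy) dG.
rewrite (a2_B h1 ux dG).
exact: (dq_uniq h1 ux dG' (dq_spec (ex_intro _ G dG'))).
Qed.

Lemma dd2_lin x h2 : U x -> is_linear (fun h1 => dd2 c U f x h1 h2).
Proof.
move=> ux r u v; have [G dG] := Gq_ex h2.
have dG' : is_dq c U (fun y => dd c U f y h2) G := is_dq_ext (fun y uy => a1_dd h2 uy) dG.
exact: (dq_lin r u v ux (dq_spec (ex_intro _ G dG'))).
Qed.

Lemma final x : U x ->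
    (forall h : E, a 0%N (x, h) = f x) /\
    (forall h : E, a 1%N (x, h) = dd c U f x h) /\
    is_linear (fun h : E => a 1%N (x, h)) /\
    is_quadratic_form (fun h : E => a 2%N (x, h)) /\
    (forall h1 h2 : E,
       a 2%N (x, h1 + h2) - a 2%N (x, h1) - a 2%N (x, h2) = dd2 c U f x h1 h2) /\
    (forall h : E, a 2%N (x, h) *+ 2 = dd2 c U f x h h).
Proof.
move=> ux.
have sym : forall p q, a 2 (x, p + q) - a 2 (x, p) - a 2 (x, q) =
    a 2 (x, q + p) - a 2 (x, q) - a 2 (x, p).
  by move=> p q; rewrite [q + p]addrC addrAC.
split; first by move=> h; exact: a0_eq.
split; first by move=> h; exact: a1_dd.
split; first exact: a1_lin.
split.
  split; first by move=> t h; exact: a2_hom.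
  split.
    move=> h2 r u v /=; rewrite !B_dd //; exact: (dd2_lin h2 ux r u v).
  move=> h1 r u v /=; rewrite !(sym h1) !B_dd //; exact: (dd2_lin h1 ux r u v).
split; first by move=> h1 h2; exact: B_dd.
move=> h; rewrite -B_dd //.
have -> : h + h = (1 + 1 : K) *: h by rewrite scalerDl scale1r.
rewrite a2_hom // expr2 mulrDl mul1r !scalerDl !scale1r.
by rewrite addrA !addrK mulr2n.
Qed.

End Main.
End Fixed.
End S.
Unset Implicit Arguments. Set Strict Implicit.

Theorem proposition5p3 (K : comPzRingType) (topK : pset (pset K))
  (c : C0concept topK) (E F : Mod K) (hE : inM c E) (hF : inM c F)
  (U : pset E) (hU : opn E U) (k : nat) (hk : (2 <= k)%N)
  (f : E -> F) (hf : isCk c k U f)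
  (a : nat -> pM c E E -> F) (R : M1 c E -> F)
  (ha : forall j : nat, (j <= k)%N ->
          isCk c (k - j) (fun p : pM c E E => U p.1) (a j))
  (hR : isC0 c (M1 c E) F (setV1 c U) R)
  (hR0 : forall (x h : E), U x -> R (x, (h, (0 : K^o))) = 0)
  (hexp : forall p : M1 c E, setV1 c U p ->
     f (p.1 + (p.2.2 : K) *: p.2.1) =
       \sum_(j < k.+1) ((p.2.2 : K) ^+ j) *: a j (p.1, p.2.1)
       + ((p.2.2 : K) ^+ k) *: R p) :
  forall x : E, U x ->
    (forall h : E, a 0%N (x, h) = f x) /\
    (forall h : E, a 1%N (x, h) = dd c U f x h) /\
    is_linear (fun h : E => a 1%N (x, h)) /\
    is_quadratic_form (fun h : E => a 2%N (x, h)) /\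
    (forall h1 h2 : E,
       a 2%N (x, h1 + h2) - a 2%N (x, h1) - a 2%N (x, h2) = dd2 c U f x h1 h2) /\
    (forall h : E, a 2%N (x, h) *+ 2 = dd2 c U f x h h).
Proof.
move=> x ux.
case: k hk hf ha hexp => [|[|m]] // hk hf ha hexp.
exact: (final hE hF hU hf ha hR hR0 hexp ux).
Qed.
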